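(* Let $n\ge 2$ and let $S=\{A_1,\dots,A_m\}$ be a finite set of real $n\times n$ matrices such that every $A\in S$ satisfies $A\mathbf{1}=\mathbf{1}$ and $\|Ax\|_{\mathcal{P}}\le\|x\|_{\mathcal{P}}$ for all $x\in\mathbb{R}^n$. Consider the switched system $x(t+1)=A_{\sigma(t)}x(t)$, $x(0)=x_0$, with $\sigma:\mathbb{N}\to\{1,\dots,m\}$. Then there exists a sequence $\sigma$ such that for every initial condition $x_0$ the trajectory converges to a multiple of $\mathbf{1}$ if and only if for every $x_0\in\mathcal{P}$ there exists $\sigma$ with $A_{\sigma(N-1)}\cdots A_{\sigma(0)}x_0\in\operatorname{int}(\mathcal{P})$, where $N=\tfrac12(3^n-2^{n+1}+1)$.
   Context: $\mathbf{1}=(1,\dots,1)^\top\in\mathbb{R}^n$. The seminorm is $\|x\|_{\mathcal{P}}=\tfrac12(\max_i x_i-\min_i x_i)$ and $\mathcal{P}=\{x:\|x\|_{\mathcal{P}}\le 1\}$. ($N$ equals the number of pairs $\{F,-F\}$ of opposite proper open faces of the polyhedron $\mathcal{P}$.) *)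

(* Defs.v *)
From HB Require Import structures.
From mathcomp Require Import all_boot all_order all_algebra.
From mathcomp Require Import all_classical all_reals all_analysis.
Set Implicit Arguments. Unset Strict Implicit. Unset Printing Implicit Defensive.
Import Order.TTheory GRing.Theory Num.Theory.
Import numFieldNormedType.Exports.
Local Open Scope classical_set_scope.
Local Open Scope ring_scope.

Definition ones (R : realType) (n : nat) : 'cV[R]_n := const_mx 1.

(* max_i x_i and min_i x_i (meaningful for n >= 1) *)
Definition vmax (R : realType) (n : nat) (x : 'cV[R]_n) : R :=
  let v := [seq x i 0 | i <- enum 'I_n] in \big[Num.max/head 0 v]_(a <- v) a.
Definition vmin (R : realType) (n : nat) (x : 'cV[R]_n) : R :=
  let v := [seq x i 0 | i <- enum 'I_n] in \big[Num.min/head 0 v]_(a <- v) a.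

Definition seminormP (R : realType) (n : nat) (x : 'cV[R]_n) : R :=
  (vmax x - vmin x) / 2.

Definition polP (R : realType) (n : nat) : set 'cV[R]_n :=
  [set x | seminormP x <= 1].

Fixpoint traj (R : realType) (n m : nat) (A : 'I_m -> 'M[R]_n)
  (sigma : nat -> 'I_m) (x0 : 'cV[R]_n) (t : nat) : 'cV[R]_n :=
  match t with
  | 0 => x0
  | t'.+1 => A (sigma t') *m traj A sigma x0 t'
  end.

Definition Nbound (n : nat) : nat := ((3 ^ n + 1 - 2 ^ n.+1) %/ 2)%N.

(* Main.v *)
Require Import Defs.
From HB Require Import structures.
From mathcomp Require Import all_boot all_order all_algebra.
From mathcomp Require Import all_classical all_reals all_analysis.
Import Order.TTheory GRing.Theory Num.Theory.
Import numFieldNormedType.Exports.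
Local Open Scope classical_set_scope.
Local Open Scope ring_scope.
Set Implicit Arguments. Unset Strict Implicit. Unset Printing Implicit Defensive.
From mathcomp Require Import ring lra zify.

Section Basics.
Variable R : realType.

Lemma bigmax_seq_ge (v : seq R) h a : a \in v -> a <= \big[Num.max/h]_(b <- v) b.
Proof.
elim: v => // b v IH; rewrite in_cons big_cons => /orP[/eqP->|/IH H].
  by rewrite le_max lexx.
by rewrite le_max H orbT.
Qed.

Lemma bigmax_seq_in (v : seq R) h : \big[Num.max/h]_(b <- v) b \in h :: v.
Proof.
elim: v => [|b v IH]; first by rewrite big_nil mem_head.
rewrite big_cons; case: (leP b (\big[Num.max/h]_(b <- v) b)) => _.
- move: IH; rewrite !in_cons => /orP[->//|->]; by rewrite !orbT.
- by rewrite !in_cons eqxx orbT.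
Qed.

Lemma bigmin_seq_le (v : seq R) h a : a \in v -> \big[Num.min/h]_(b <- v) b <= a.
Proof.
elim: v => // b v IH; rewrite in_cons big_cons => /orP[/eqP->|/IH H].
  by rewrite ge_min lexx.
by rewrite ge_min H orbT.
Qed.

Lemma bigmin_seq_in (v : seq R) h : \big[Num.min/h]_(b <- v) b \in h :: v.
Proof.
elim: v => [|b v IH]; first by rewrite big_nil mem_head.
rewrite big_cons; case: (leP b (\big[Num.min/h]_(b <- v) b)) => _.
- by rewrite !in_cons eqxx orbT.
- move: IH; rewrite !in_cons => /orP[->//|->]; by rewrite !orbT.
Qed.

Variable n : nat.
Implicit Types x y : 'cV[R]_n.

Lemma vmax_ge x i : x i 0 <= vmax x.
Proof. apply: bigmax_seq_ge; apply: map_f; by rewrite mem_enum. Qed.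

Lemma vmin_le x i : vmin x <= x i 0.
Proof. apply: bigmin_seq_le; apply: map_f; by rewrite mem_enum. Qed.

Hypothesis n0 : (0 < n)%N.

Lemma head_in (v : seq R) : v != [::] -> head 0 v \in v.
Proof. by case: v => // a v _; rewrite mem_head. Qed.

Lemma enum_nonnil x : [seq x i 0 | i <- enum 'I_n] != [::].
Proof.
have i0 : 'I_n := Ordinal n0.
apply/eqP => H; have : x i0 0 \in [seq x i 0 | i <- enum 'I_n].
  by apply: map_f; rewrite mem_enum.
by rewrite H.
Qed.

Lemma vmax_ex x : exists i, vmax x = x i 0.
Proof.
rewrite /vmax /=.
have := bigmax_seq_in [seq x i 0 | i <- enum 'I_n] (head 0 [seq x i 0 | i <- enum 'I_n]).
rewrite in_cons => /orP[/eqP H|H].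
  rewrite H; have /mapP[i _ ->] := head_in (enum_nonnil x); by exists i.
by move: H => /mapP[i _ ->]; exists i.
Qed.

Lemma vmin_ex x : exists i, vmin x = x i 0.
Proof.
rewrite /vmin /=.
have := bigmin_seq_in [seq x i 0 | i <- enum 'I_n] (head 0 [seq x i 0 | i <- enum 'I_n]).
rewrite in_cons => /orP[/eqP H|H].
  rewrite H; have /mapP[i _ ->] := head_in (enum_nonnil x); by exists i.
by move: H => /mapP[i _ ->]; exists i.
Qed.

Lemma vmax_le x b : (forall i, x i 0 <= b) -> vmax x <= b.
Proof. by have [i ->] := vmax_ex x. Qed.

Lemma vmin_ge x b : (forall i, b <= x i 0) -> b <= vmin x.
Proof. by have [i ->] := vmin_ex x. Qed.

Lemma semi_ge0 x : 0 <= seminormP x.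
Proof.
rewrite /seminormP; have i0 : 'I_n := Ordinal n0.
apply: divr_ge0 => //; rewrite subr_ge0; exact: le_trans (vmin_le x i0) (vmax_ge x i0).
Qed.

Lemma semi_diff x i j : x i 0 - x j 0 <= 2 * seminormP x.
Proof.
rewrite /seminormP mulrC divfK //; apply: lerB; [exact: vmax_ge|exact: vmin_le].
Qed.

Lemma semi_le x b : (forall i j, x i 0 - x j 0 <= 2 * b) -> seminormP x <= b.
Proof.
move=> H; rewrite /seminormP; have [i ->] := vmax_ex x; have [j Hj] := vmin_ex x.
rewrite Hj ler_pdivrMr // mulrC; exact: H.
Qed.

Lemma semi_lt x b : (forall i j, x i 0 - x j 0 < 2 * b) -> seminormP x < b.
Proof.
move=> H; rewrite /seminormP; have [i Hi] := vmax_ex x; have [j Hj] := vmin_ex x.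
rewrite Hi Hj ltr_pdivrMr // mulrC; exact: H.
Qed.

Lemma semi_ex x : exists i j, x i 0 - x j 0 = 2 * seminormP x.
Proof.
have [i Hi] := vmax_ex x; have [j Hj] := vmin_ex x.
exists i, j; rewrite /seminormP -Hi -Hj mulrC divfK //.
Qed.

Lemma semiN x : seminormP (- x) = seminormP x.
Proof.
apply/eqP; rewrite eq_le; apply/andP; split; apply: semi_le => i j.
  rewrite !mxE opprK addrC; exact: semi_diff.
have := semi_diff (- x) j i; by rewrite !mxE opprK addrC.
Qed.

End Basics.


Section Prod.
Variables (R : realType) (n m : nat) (A : 'I_m -> 'M[R]_n).

Definition prodL (s : seq 'I_m) : 'M[R]_n := foldr (fun a M => A a *m M) 1%:M s.

Lemma prodL_cat s1 s2 : prodL (s1 ++ s2) = prodL s1 *m prodL s2.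
Proof. elim: s1 => [|a s1 IH] /=; first by rewrite mul1mx. by rewrite IH mulmxA. Qed.

Lemma traj_prod sigma x t : traj A sigma x t = prodL (rev (map sigma (iota 0 t))) *m x.
Proof.
elim: t => [|t IH]; first by rewrite /= mul1mx.
have -> : iota 0 t.+1 = iota 0 t ++ [:: t] by rewrite -addn1 iotaD.
by rewrite map_cat rev_cat /= IH mulmxA.
Qed.

Lemma traj_shift sigma x a k :
  traj A sigma x (a + k) = traj A (fun u => sigma (a + u)%N) (traj A sigma x a) k.
Proof. elim: k => [|k IH] /=; first by rewrite addn0. by rewrite addnS /= IH. Qed.

Hypothesis HA1 : forall k, A k *m ones R n = ones R n.
Hypothesis HAne : forall k (x : 'cV[R]_n), seminormP (A k *m x) <= seminormP x.

Lemma prodL_ones s : prodL s *m ones R n = ones R n.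
Proof. elim: s => [|a s IH] /=; first by rewrite mul1mx. by rewrite -mulmxA IH HA1. Qed.

Lemma prodL_ne s x : seminormP (prodL s *m x) <= seminormP x.
Proof.
elim: s => [|a s IH] /=; first by rewrite mul1mx.
by rewrite -mulmxA; apply: le_trans (HAne _ _) IH.
Qed.

Lemma traj_ne sigma x t : seminormP (traj A sigma x t) <= seminormP x.
Proof. by rewrite traj_prod prodL_ne. Qed.

Lemma traj_ne2 sigma x t u : (t <= u)%N ->
  seminormP (traj A sigma x u) <= seminormP (traj A sigma x t).
Proof.
move=> tu; rewrite -(subnKC tu) traj_shift; exact: traj_ne.
Qed.

End Prod.

Definition sv (R : realType) n (S : {set 'I_n}) : 'cV[R]_n :=
  \col_i (if i \in S then 1 else -1).

Section Contr.
Variables (R : realType) (n : nat).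
Hypothesis n0 : (0 < n)%N.

Lemma sv_le1 (S : {set 'I_n}) : seminormP (sv R S) <= 1.
Proof.
apply: semi_le => // i j; rewrite !mxE mulr1.
by case: (i \in S); case: (j \in S); rewrite ?subrr ?opprK // ?subr_ge0; lra.
Qed.

Lemma contr (M : 'M[R]_n) (rho : R) :
  M *m ones R n = ones R n ->
  (forall S, seminormP (M *m sv R S) <= rho) ->
  forall x, seminormP (M *m x) <= rho * seminormP x.
Proof.
move=> M1 HS x; apply: semi_le => // i j.
set c := fun k => M i k - M j k.
set s := seminormP x.
have s0 : 0 <= s by exact: semi_ge0.
have H1 l : \sum_k M l k = 1.
  have := congr1 (fun v : 'cV[R]_n => v l 0) M1; rewrite /= !mxE => <-.
  by apply: eq_bigr => k _; rewrite mxE mulr1.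
have sumc : \sum_k c k = 0 by rewrite /c sumrB !H1 subrr.
set S := finset (fun k : 'I_n => 0 < c k).
have E1 : (M *m x) i 0 - (M *m x) j 0 = \sum_k c k * (x k 0 - vmin x).
  have -> : \sum_k c k * (x k 0 - vmin x) = \sum_k c k * x k 0 - (\sum_k c k) * vmin x.
    by rewrite mulr_suml -sumrB; apply: eq_bigr => k _; rewrite mulrBr.
  rewrite sumc mul0r subr0 /c !mxE; under [RHS]eq_bigr do rewrite mulrBl.
  by rewrite sumrB.
have E2 : (M *m sv R S) i 0 - (M *m sv R S) j 0 = \sum_k (if k \in S then 2 * c k else 0) - \sum_k c k.
  rewrite !mxE -!sumrB; apply: eq_bigr => k _; rewrite /c !mxE.
  case: (k \in S); lra.
have H2 : \sum_k (if k \in S then 2 * c k else 0) <= 2 * rho.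
  have := semi_diff (M *m sv R S) i j; rewrite E2 sumc subr0 => H.
  apply: le_trans H _; rewrite ler_pM2l //.
rewrite E1; apply: le_trans (_ : \sum_k (if k \in S then 2 * c k else 0) * s <= _).
  apply: ler_sum => k _; rewrite inE.
  have hmin := vmin_le x k.
  have hmax : x k 0 - vmin x <= 2 * s.
    have := vmax_ge x k; rewrite /s /seminormP; lra.
  case: ltP => ck.
    nra.
  nra.
rewrite -mulr_suml; nra.
Qed.

End Contr.


Section Good.
Variables (R : realType) (n m : nat) (A : 'I_m -> 'M[R]_n).
Hypothesis n0 : (0 < n)%N.
Hypothesis HA1 : forall k, A k *m ones R n = ones R n.
Hypothesis HAne : forall k (x : 'cV[R]_n), seminormP (A k *m x) <= seminormP x.

Definition bad (s : seq 'I_m) : {set {set 'I_n}} :=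
  finset (fun S => ~~ (seminormP (prodL A s *m sv R S) < 1)).

Lemma exists_good (N : nat) :
  (forall x0 : 'cV[R]_n, seminormP x0 <= 1 ->
     exists sigma, seminormP (traj A sigma x0 N) < 1) ->
  exists s, forall S, seminormP (prodL A s *m sv R S) < 1.
Proof.
move=> H.
suff: forall k s, (#|bad s| <= k)%N -> exists s, forall S, seminormP (prodL A s *m sv R S) < 1.
  by move=> /(_ _ [::] (leqnn _)).
elim=> [|k IH] s.
  rewrite leqn0 cards_eq0 => /eqP H0; exists s => S.
  have : S \notin bad s by rewrite H0 inE.
  by rewrite inE negbK.
case: (set_0Vmem (bad s)) => [H0 _|[S HS] Hk].
  exists s => S; have : S \notin bad s by rewrite H0 inE.
  by rewrite inE negbK.
have Hx : seminormP (prodL A s *m sv R S) <= 1.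
  exact: le_trans (prodL_ne HAne _ _) (sv_le1 R n0 _).
have [sigma Hs] := H _ Hx.
apply: (IH (rev (map sigma (iota 0 N)) ++ s)).
rewrite -ltnS; apply: leq_trans Hk; apply: proper_card; apply/properP; split.
  apply/fintype.subsetP => T; rewrite !inE; apply: contra => HT.
  rewrite prodL_cat -mulmxA; apply: le_lt_trans HT; exact: prodL_ne.
exists S => //; rewrite inE negbK prodL_cat -mulmxA -traj_prod //.
Qed.

End Good.


Lemma sum_ge_term (R : realType) (I : finType) (F : I -> R) k :
  (forall i, 0 <= F i) -> F k <= \sum_i F i.
Proof. move=> H; rewrite (bigD1 k) //= lerDl; exact: sumr_ge0. Qed.

Lemma incr (R : realType) n (n0 : (0 < n)%N) (B : 'M[R]_n) (y : 'cV[R]_n) i :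
  B *m ones R n = 0 -> `|(B *m y) i 0| <= 2 * (\sum_j `|B i j|) * seminormP y.
Proof.
move=> B1.
have sumB : \sum_j B i j = 0.
  have -> : \sum_j B i j = (B *m ones R n) i 0.
    by rewrite mxE; apply: eq_bigr => k _; rewrite mxE mulr1.
  by rewrite B1 mxE.
have -> : (B *m y) i 0 = \sum_j B i j * (y j 0 - vmin y).
  have -> : \sum_j B i j * (y j 0 - vmin y) = \sum_j B i j * y j 0 - (\sum_j B i j) * vmin y.
    by rewrite mulr_suml -sumrB; apply: eq_bigr => k _; rewrite mulrBr.
  by rewrite sumB mul0r subr0 mxE.
apply: le_trans (ler_norm_sum _ _ _) _.
rewrite (mulrC 2) -mulrA mulr_suml; apply: ler_sum => j _.
rewrite normrM; have := vmin_le y j; have := vmax_ge y j.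
rewrite /seminormP => h1 h2.
have -> : `|y j 0 - vmin y| = y j 0 - vmin y by rewrite ger0_norm // subr_ge0.
have := normr_ge0 (B i j); nra.
Qed.

Section Conv.
Variables (R : realType) (n m : nat) (A : 'I_m -> 'M[R]_n).
Hypothesis n1 : (1 < n)%N.
Hypothesis HA1 : forall k, A k *m ones R n = ones R n.
Hypothesis HAne : forall k (x : 'cV[R]_n), seminormP (A k *m x) <= seminormP x.

Let n0 : (0 < n)%N. Proof. exact: ltnW. Qed.

Lemma good_nonnil (s : seq 'I_m) :
  (forall S, seminormP (prodL A s *m sv R S) < 1) -> s != [::].
Proof.
move=> H; apply/eqP => s0; move: (H [set Ordinal n0]%SET); rewrite s0 /= mul1mx.
have := semi_diff (sv R [set Ordinal n0]%SET) (Ordinal n0) (Ordinal n1).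
rewrite !mxE !inE eqxx /=.
lra.
Qed.

Variables (a : 'I_m) (s0 : seq 'I_m).
Let s := a :: s0.
Hypothesis Hgood : forall S, seminormP (prodL A s *m sv R S) < 1.
Let L := size s.
Let L0 : (0 < L)%N. Proof. by []. Qed.
Definition psig (t : nat) : 'I_m := nth a (rev s) (t %% L).
Let rho := \big[Num.max/0]_(S : {set 'I_n}) seminormP (prodL A s *m sv R S).
Let rho_lt1 : rho < 1.
Proof. apply: bigmax_lt => // S _; exact: Hgood. Qed.
Let rho_ge0 : 0 <= rho.
Proof.
have := le_bigmax 0 (fun S : {set 'I_n} => seminormP (prodL A s *m sv R S)) finset.set0.
have := semi_ge0 n0 (prodL A s *m sv R finset.set0); rewrite /rho; lra.
Qed.
Let Hcontr x : seminormP (prodL A s *m x) <= rho * seminormP x.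
Proof.
apply: contr => //; first exact: prodL_ones.
move=> S; exact: le_bigmax.
Qed.

Let Hsig k u : psig (k * L + u) = psig u.
Proof. by rewrite /psig modnMDl. Qed.

Let HL y : traj A psig y L = prodL A s *m y.
Proof.
rewrite traj_prod; congr (prodL _ _ *m _).
have -> : [seq psig i | i <- iota 0 L] = mkseq (nth a (rev s)) (size (rev s)).
  rewrite /mkseq size_rev; apply/eq_in_map => t; rewrite mem_iota add0n => /andP[_ tL].
  by rewrite /psig modn_small.
by rewrite mkseq_nth revK.
Qed.

Let Hstep x k : traj A psig x (k * L + L) = prodL A s *m traj A psig x (k * L).
Proof.
rewrite traj_shift; have -> : (fun u => psig (k * L + u)) = psig.
  by apply: funext => u; exact: Hsig.
exact: HL.
Qed.

Let sn x t := seminormP (traj A psig x t).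

Let Hgeo x k : sn x (k * L) <= rho ^+ k * seminormP x.
Proof.
elim: k => [|k IH]; first by rewrite mul0n expr0 mul1r.
rewrite /sn mulSnr Hstep; apply: le_trans (Hcontr _) _.
rewrite exprS -mulrA; exact: ler_wpM2l.
Qed.

Let H2L x t : sn x (t + 2 * L) <= rho * sn x t.
Proof.
set k := (t %/ L).+1.
have h1 : (t <= k * L)%N.
  by rewrite /k mulSnr {1}(divn_eq t L) leq_add2l ltnW // ltn_mod.
have h2 : (k * L + L <= t + 2 * L)%N.
  by rewrite /k mulSnr mul2n -addnn addnA leq_add2r leq_add2r leq_trunc_div.
apply: le_trans (traj_ne2 HAne _ _ h2) _.
rewrite Hstep; apply: le_trans (Hcontr _) _.
apply: ler_wpM2l => //; exact: traj_ne2.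
Qed.

Let K := 2 * \sum_k \sum_i \sum_j `|(A k - 1%:M) i j|.
Let K0 : 0 <= K.
Proof. apply: mulr_ge0 => //; do 3 (apply: sumr_ge0 => ? _). by []. Qed.

Let Hinc x t i : `|traj A psig x t.+1 i 0 - traj A psig x t i 0| <= K * sn x t.
Proof.
rewrite /= /sn; set y := traj A psig x t; set k := psig t.
have -> : (A k *m y) i 0 - y i 0 = ((A k - 1%:M) *m y) i 0.
  by rewrite mulmxBl mul1mx !mxE.
apply: le_trans (@incr _ _ n0 (A k - 1%:M) y i _) _.
  by rewrite mulmxBl mul1mx HA1 subrr.

apply: ler_wpM2r; first exact: semi_ge0.
rewrite /K ler_pM2l //.
apply: le_trans (_ : _ <= \sum_i0 \sum_j `|(A k - 1%:M) i0 j|) _.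
  apply: (@sum_ge_term _ _ (fun i => \sum_j `|(A k - 1%:M) i j|) i) => i0.
  by apply: sumr_ge0.
apply: (@sum_ge_term _ _ (fun k => \sum_i \sum_j `|(A k - 1%:M) i j|) k) => k0.
by do 2 (apply: sumr_ge0 => ? _).
Qed.

Let HB1 x t u i : `|traj A psig x (t + u) i 0 - traj A psig x t i 0| <= u%:R * K * sn x t.
Proof.
elim: u => [|u IH]; first by rewrite addn0 subrr normr0 mul0r mul0r.
rewrite addnS.
have := ler_normD (traj A psig x (t + u).+1 i 0 - traj A psig x (t + u) i 0)
                  (traj A psig x (t + u) i 0 - traj A psig x t i 0).
rewrite addrA subrK => h; apply: le_trans h _.
have h2 : sn x (t + u) <= sn x t by exact: traj_ne2 (leq_addr _ _).
have := Hinc x (t + u) i; rewrite mulrSr.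
have : K * sn x (t + u) <= K * sn x t by exact: ler_wpM2l.
lra.
Qed.

Let C := 2 * L%:R * K / (1 - rho).
Let HC : C * (1 - rho) = 2 * L%:R * K.
Proof. rewrite /C divfK //; rewrite subr_eq0; apply/eqP => h; move: rho_lt1; rewrite -h ltxx. by []. Qed.
Let HC2 : 2 * L%:R * K <= C.
Proof.
have h0 : 0 <= 2 * L%:R * K by apply: mulr_ge0 => //; apply: mulr_ge0.
have := HC; have := rho_ge0; have := rho_lt1; nra.
Qed.

Let Htail x t u i : `|traj A psig x (t + u) i 0 - traj A psig x t i 0| <= C * sn x t.
Proof.
elim/ltn_ind: u t => u IH t.
have sn0 : 0 <= sn x t by exact: semi_ge0.
case: (leqP u (2 * L)) => hu.
  apply: le_trans (HB1 x t u i) _; apply: ler_wpM2r => //; apply: le_trans HC2.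
  apply: ler_wpM2r => //; rewrite -natrM ler_nat //.
have -> : (t + u = (t + 2 * L) + (u - 2 * L))%N by rewrite -addnA subnKC // ltnW.
have hlt : (u - 2 * L < u)%N by have := L0; lia.
have h1 := IH (u - 2 * L)%N hlt (t + 2 * L)%N.
have h2 := HB1 x t (2 * L) i.
have h3 := H2L x t.
have := ler_normD (traj A psig x (t + 2 * L + (u - 2 * L)) i 0 - traj A psig x (t + 2 * L) i 0)
                  (traj A psig x (t + 2 * L) i 0 - traj A psig x t i 0).
rewrite addrA subrK => h; apply: le_trans h _.
have C0 : 0 <= C by apply: le_trans HC2; apply: mulr_ge0 => //; apply: mulr_ge0.
have h4 : C * sn x (t + 2 * L) <= C * (rho * sn x t) by exact: ler_wpM2l.
rewrite natrM in h2.
have h5 : C * (rho * sn x t) + 2 * L%:R * K * sn x t = C * sn x t.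
  by rewrite -HC; ring.
lra.
Qed.
Let Hsmall x e : 0 < e -> exists T, forall t, (T <= t)%N -> sn x t < e.
Proof.
move=> e0.
have sx0 : 0 <= seminormP x by exact: semi_ge0.
have ep : 0 < e / (seminormP x + 1) by apply: divr_gt0 => //; lra.
have hr : `|rho| < 1 by rewrite ger0_norm.
have := cvg_expr hr => /cvgrPdist_lt /(_ _ ep) [T _ HT].
have hT := HT T (leqnn T); rewrite /= sub0r normrN ger0_norm ?exprn_ge0 // in hT.
exists (T * L)%N => t tT.
apply: le_lt_trans (traj_ne2 HAne _ _ tT) _.
apply: le_lt_trans (Hgeo x T) _.
have h1 : rho ^+ T * seminormP x <= e / (seminormP x + 1) * seminormP x.
  by apply: ler_wpM2r => //; exact: ltW.
apply: le_lt_trans h1 _.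
rewrite mulrAC ltr_pdivrMr; last lra.
have : 0 < e by []; nra.
Qed.

Lemma conv_main x : exists c, traj A psig x @ \oo --> c *: ones R n.
Proof.
set i0 := Ordinal n0.
set y0 := fun t => traj A psig x t i0 0.
have C0 : 0 <= C by apply: le_trans HC2; apply: mulr_ge0 => //; apply: mulr_ge0.
have cy : cvg (y0 @ \oo).
  apply/cauchy_cvgP; apply: cauchy_exP => e e0.
  have ep : 0 < e / (C + 1) by apply: divr_gt0 => //; lra.
  have [T HT] := Hsmall x ep.
  exists (y0 T); exists T => // t /= tT.
  rewrite -ball_normE /ball_ /= distrC /y0.
  have := Htail x T (t - T) i0; rewrite subnKC // => h; apply: le_lt_trans h _.
  have := HT T (leqnn T); have := semi_ge0 n0 (traj A psig x T); rewrite /sn => h1 h2.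
  have : C * seminormP (traj A psig x T) <= C * (e / (C + 1)).
    by apply: ler_wpM2l => //; exact: ltW.
  have : C * (e / (C + 1)) < e.
    by rewrite mulrA ltr_pdivrMr; [nra|lra].
  lra.
set c := lim (y0 @ \oo); exists c.
apply/cvgrPdist_lt => e e0.
have e2 : 0 < e / 2 by apply: divr_gt0.
have e4 : 0 < e / 4 by apply: divr_gt0.
have := cy => /cvgrPdist_lt /(_ _ e2) [T1 _ H1].
have [T2 H2] := Hsmall x e4.
exists (maxn T1 T2) => // t /= ht.
have hb : ball (c *: ones R n) e (traj A psig x t).
  split => // i j; rewrite -ball_normE /ball_ /= (ord1 j) !mxE mulr1.
  have := H1 t (leq_trans (leq_maxl _ _) ht); rewrite /= /y0 => h1.
  have := H2 t (leq_trans (leq_maxr _ _) ht); rewrite /sn => h2.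
  have := semi_diff (traj A psig x t) i0 i.
  have := semi_diff (traj A psig x t) i i0.
  rewrite ltr_norml in h1; rewrite ltr_norml.
  move: h1 => /andP[h1a h1b].
  rewrite /c => d1 d2; apply/andP; split; lra.
by move: hb; rewrite -ball_normE.
Qed.

End Conv.


Section Int.
Variables (R : realType) (n : nat).
Hypothesis n0 : (0 < n)%N.

Lemma semi_int (y : 'cV[R]_n) : seminormP y < 1 -> interior (@polP R n) y.
Proof.
move=> hy; set e := (1 - seminormP y) / 2.
have e0 : 0 < e by apply: divr_gt0 => //; lra.
rewrite /interior /=; apply/nbhs_ballP; exists e => // z [_ hz].
rewrite /polP /=; apply: semi_le => // i j.
have := hz i 0; have := hz j 0; rewrite -!ball_normE /ball_ /= !ltr_norml.
move=> /andP[h1 h2] /andP[h3 h4].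
have := semi_diff y i j; rewrite /e in h1 h2 h3 h4 *; lra.
Qed.

Lemma int_semi (y : 'cV[R]_n) : interior (@polP R n) y -> seminormP y < 1.
Proof.
rewrite /interior /= => /nbhs_ballP [e /= e0 He].
set d := e / (2 * (`|y| + 1)).
have d0 : 0 < d by apply: divr_gt0 => //; apply: mulr_gt0 => //; have := normr_ge0 y; lra.
have hb : ball y e ((1 + d) *: y).
  rewrite -ball_normE /ball_ /= scalerDl scale1r opprD addrA subrr sub0r normrN normrZ.
  rewrite ger0_norm; last exact: ltW.
  rewrite /d; have := normr_ge0 y => hn.
  rewrite mulrC mulrA ltr_pdivrMr; last by nra.
  nra.
have := He _ hb; rewrite /polP /= => h.
have [i [j Hij]] := semi_ex n0 y.
have := semi_diff ((1 + d) *: y) i j; rewrite !mxE -mulrBr Hij => h2.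
have s0 := semi_ge0 n0 y.
nra.
Qed.


End Int.

Lemma eventually_small (R : realType) n (n0 : (0 < n)%N) (u : nat -> 'cV[R]_n) (c : R) :
  u @ \oo --> c *: ones R n -> exists T, seminormP (u T) < 1.
Proof.
move=> /cvgrPdist_lt /(_ (1/2) ltac:(lra)) [T _ HT].
exists T; have := HT T (leqnn T) => /= h.
have hb : ball (c *: ones R n) (1/2) (u T) by rewrite -ball_normE.
case: hb => _ hb.
apply: (semi_lt n0) => i j.
have := hb i 0; have := hb j 0; rewrite -!ball_normE /ball_ /= !mxE !ltr_norml mulr1.
move=> /andP[h1 h2] /andP[h3 h4]; lra.
Qed.


Definition o0 : 'I_3 := @Ordinal 3 0 isT.
Definition o1 : 'I_3 := @Ordinal 3 1 isT.
Definition o2 : 'I_3 := @Ordinal 3 2 isT.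

Definition rt (R : realType) n (x : 'cV[R]_n) : {ffun 'I_n -> 'I_3} :=
  [ffun k => if x k 0 == vmax x then o1 else if x k 0 == vmin x then o2 else o0].

Section Const.
Variables (R : realType) (n : nat).
Hypothesis n0 : (0 < n)%N.

Lemma rt_max (x y : 'cV[R]_n) k : rt x = rt y -> (x k 0 == vmax x) = (y k 0 == vmax y).
Proof.
move=> H; have := congr1 (fun f : {ffun 'I_n -> 'I_3} => f k) H; rewrite /= !ffunE.
by case: (x k 0 == vmax x); case: (y k 0 == vmax y) => //; case: ifP => //; case: ifP.
Qed.

Lemma rt_min (x y : 'cV[R]_n) k : rt x = rt y -> x k 0 != vmax x ->
   (x k 0 == vmin x) = (y k 0 == vmin y).
Proof.
move=> H hx; have hy := rt_max k H; rewrite (negbTE hx) in hy.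
have := congr1 (fun f : {ffun 'I_n -> 'I_3} => f k) H; rewrite /= !ffunE (negbTE hx) -hy.
by case: (x k 0 == vmin x); case: (y k 0 == vmin y).
Qed.

Lemma const1 (M : 'M[R]_n) (x y : 'cV[R]_n) :
  (forall z, seminormP (M *m z) <= seminormP z) ->
  seminormP x = 1 -> seminormP y = 1 -> rt x = rt y ->
  1 <= seminormP (M *m x) -> 1 <= seminormP (M *m y).
Proof.
move=> HM sx sy Hrt hMx.
have [i [j Hij]] := semi_ex n0 (M *m x).
have hMx1 : seminormP (M *m x) = 1.
  by apply/eqP; rewrite eq_le hMx andbT -sx HM.
rewrite hMx1 in Hij.
have dx : vmax x - vmin x = 2 by move: sx; rewrite /seminormP; lra.
have dy : vmax y - vmin y = 2 by move: sy; rewrite /seminormP; lra.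
set g := fun k => Num.min (if x k 0 == vmax x then 2 else vmax x - x k 0)
                          (if x k 0 == vmin x then 2 else x k 0 - vmin x).
have g0 k : 0 < g k.
  rewrite /g lt_min; apply/andP; split; case: ifP => // /negbT h.
    by rewrite subr_gt0 lt_neqAle h vmax_ge.
  by rewrite subr_gt0 lt_neqAle eq_sym h vmin_le.
set dl := \big[Num.min/2]_(b <- [seq g k | k <- enum 'I_n]) b.
have dlg k : dl <= g k by apply: bigmin_seq_le; apply: map_f; rewrite mem_enum.
have dl0 : 0 < dl.
  have := bigmin_seq_in [seq g k | k <- enum 'I_n] 2.
  rewrite -/dl in_cons => /orP[/eqP -> //| /mapP[k _ ->]]; exact: g0.
set ep := dl / 4.
set w := (1 + ep) *: x - ep *: y.
have sw : seminormP w <= 1.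
  apply: semi_le => // k l.
  rewrite /w !mxE.
  have hyd := semi_diff y l k; rewrite sy in hyd.
  have hxk := vmax_ge x k; have hxl := vmin_le x l.
  suff hd : (x k 0 - x l 0 = 2 /\ y k 0 - y l 0 = 2) \/ x k 0 - x l 0 <= 2 - dl.
    rewrite /ep; case: hd => [[h1 h2]|h1]; first nra.
    have : 0 <= (1 + dl / 4) * (2 - dl - (x k 0 - x l 0)) by apply: mulr_ge0; lra.
    nra.
  have := dlg k; have := dlg l; rewrite /g.
  case hk: (x k 0 == vmax x); case hl: (x l 0 == vmin x).
  - left; move/eqP: hk => hk; move/eqP: hl => hl.
    have := rt_max k Hrt; rewrite hk eqxx => /esym/eqP hyk.
    have hlx : x l 0 != vmax x by rewrite hl; apply/eqP => h; move: dx; rewrite h subrr; lra.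
    have := rt_min Hrt hlx; rewrite hl eqxx => /esym/eqP hyl.
    rewrite hyk hyl; split; lra.
  - rewrite !le_min => /andP[a1 a2] /andP[b1 b2]; right; lra.
  - rewrite !le_min => /andP[a1 a2] /andP[b1 b2]; right; lra.
  - rewrite !le_min => /andP[a1 a2] /andP[b1 b2]; right; lra.
have hfw : (M *m w) i 0 - (M *m w) j 0
    = (1 + ep) * ((M *m x) i 0 - (M *m x) j 0) - ep * ((M *m y) i 0 - (M *m y) j 0).
  rewrite /w mulmxBr -!scalemxAr !mxE; ring.
have h1 := semi_diff (M *m w) i j.
have h2 : seminormP (M *m w) <= 1 by apply: le_trans (HM w) sw.
have h3 := semi_diff (M *m y) i j.
rewrite hfw Hij in h1.
have ep0 : 0 < ep by rewrite /ep; apply: divr_gt0.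
nra.
Qed.

Lemma const2 (M : 'M[R]_n) (x y : 'cV[R]_n) :
  (forall z, seminormP (M *m z) <= seminormP z) ->
  seminormP x = 1 -> seminormP y = 1 -> rt x = rt y ->
  seminormP (M *m y) < 1 -> seminormP (M *m x) < 1.
Proof.
move=> HM sx sy Hrt hy; rewrite ltNge; apply/negP => hx.
by move: hy; rewrite ltNge (const1 HM sx sy Hrt hx).
Qed.

Lemma rt_neqN (x : 'cV[R]_n) : seminormP x = 1 -> rt x <> rt (- x).
Proof.
move=> sx H.
have [k hk] := vmax_ex n0 x; have [l hl] := vmin_ex n0 x.
have e := rt_max k H; rewrite -hk eqxx in e.
move/esym/eqP: e; rewrite mxE => e.
have := vmax_ge (- x) l; rewrite mxE => f.
move: sx; rewrite /seminormP; lra.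
Qed.

End Const.


Section Count.
Variable n : nat.
Let FT := {ffun 'I_n -> 'I_3}.
Definition N1 : {set FT} := finset (fun f : FT => f \in ffun_on (predC1 o1)).
Definition N2 : {set FT} := finset (fun f : FT => f \in ffun_on (predC1 o2)).
Definition Qs : {set FT} := ~: (N1 :|: N2).

Lemma cardN1 : #|N1| = (2 ^ n)%N.
Proof. by rewrite cardsE card_ffun_on cardC1 !card_ord. Qed.
Lemma cardN2 : #|N2| = (2 ^ n)%N.
Proof. by rewrite cardsE card_ffun_on cardC1 !card_ord. Qed.

Lemma cardN12 : (#|N1 :&: N2| <= 1)%N.
Proof.
apply: leq_trans (_ : _ <= #|[set ([ffun => o0] : FT)]%SET|)%N _; last by rewrite cards1.
apply: subset_leq_card.
apply/fintype.subsetP => f; rewrite !inE => /andP[/ffun_onP h1 /ffun_onP h2].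
apply/eqP/ffunP => k; rewrite ffunE.
have := h1 k; have := h2 k; rewrite !inE.
case: (f k) => -[|[|[|x]]] //= hx _ _; exact: val_inj.
Qed.

Lemma cardQ : (#|Qs| + 2 ^ n.+1 <= 3 ^ n + 1)%N.
Proof.
have h1 := cardsC (N1 :|: N2).
rewrite card_ffun !card_ord in h1.
have h2 := cardsUI N1 N2.
rewrite cardN1 cardN2 in h2.
have h3 := cardN12.
rewrite /Qs expnS.
lia.
Qed.

Lemma inQ (f : FT) k l : f k = o1 -> f l = o2 -> f \in Qs.
Proof.
move=> hk hl; rewrite !inE negb_or; apply/andP; split.
  apply/ffun_onP => h; have := h k; by rewrite !inE hk eqxx.
apply/ffun_onP => h; have := h l; by rewrite !inE hl eqxx.
Qed.

End Count.


Definition sg (R : realType) n (b : bool) (z : 'cV[R]_n) := if b then z else - z.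

Section Final.
Variables (R : realType) (n m : nat) (A : 'I_m -> 'M[R]_n).
Hypothesis n1 : (1 < n)%N.
Hypothesis HA1 : forall k, A k *m ones R n = ones R n.
Hypothesis HAne : forall k (x : 'cV[R]_n), seminormP (A k *m x) <= seminormP x.
Let n0 : (0 < n)%N. Proof. exact: ltnW. Qed.

Lemma traj_ext sigma sigma' x k : (forall u, (u < k)%N -> sigma u = sigma' u) ->
  traj A sigma x k = traj A sigma' x k.
Proof.
elim: k => [|k IH] H //=; rewrite H // IH // => u uk; apply: H; exact: ltnW.
Qed.

Lemma semi_sg b (z : 'cV[R]_n) : seminormP (sg b z) = seminormP z.
Proof. by case: b => //=; rewrite semiN. Qed.

Lemma shortcut sigma x0 s t T (b1 b2 : bool) : (s < t)%N -> (t <= T)%N ->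
  seminormP (traj A sigma x0 T) < 1 ->
  seminormP (traj A sigma x0 s) = 1 -> seminormP (traj A sigma x0 t) = 1 ->
  rt (sg b1 (traj A sigma x0 s)) = rt (sg b2 (traj A sigma x0 t)) ->
  exists sigma', seminormP (traj A sigma' x0 (s + (T - t))) < 1.
Proof.
move=> st tT hT hs ht Hrt.
set u := traj A sigma x0 t; set v := traj A sigma x0 s.
set tau := fun w => sigma (t + w)%N.
set M := prodL A (rev (map tau (iota 0 (T - t)))).
have hMu : traj A sigma x0 T = M *m u.
  have := traj_shift A sigma x0 t (T - t); rewrite subnKC // => ->.
  by rewrite traj_prod.
have HM z : seminormP (M *m z) <= seminormP z by exact: prodL_ne.
have hsg b z : seminormP (M *m sg b z) = seminormP (M *m z).
  by case: b => //=; rewrite mulmxN semiN.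
have hv : seminormP (M *m v) < 1.
  rewrite -(hsg b1); apply: (const2 n0 HM _ _ Hrt); rewrite ?semi_sg //.
  by rewrite hsg -hMu.
exists (fun w => if (w < s)%N then sigma w else sigma (w + (t - s))%N).
rewrite traj_shift.
have -> : traj A (fun w => if (w < s)%N then sigma w else sigma (w + (t - s))%N) x0 s = v.
  by apply: traj_ext => w ->.
have -> : (fun w => if (s + w < s)%N then sigma (s + w)%N else sigma (s + w + (t - s))%N) = tau.
  apply: funext => w; rewrite ltnNge leq_addr /= /tau; congr sigma; lia.
by rewrite traj_prod.
Qed.

Lemma rt_inQ (z : 'cV[R]_n) : seminormP z = 1 -> rt z \in Qs n.
Proof.
move=> sz; have [k hk] := vmax_ex n0 z; have [l hl] := vmin_ex n0 z.
apply: (@inQ _ _ k l); rewrite ffunE.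
  by rewrite -hk eqxx.
have hne : (z l 0 == vmax z) = false.
  apply/negbTE/eqP => h; move: sz; rewrite /seminormP hl h subrr; lra.
by rewrite hne hl eqxx.
Qed.

Lemma within_N x0 T sigma : seminormP x0 <= 1 -> seminormP (traj A sigma x0 T) < 1 ->
  exists sigma', seminormP (traj A sigma' x0 (Nbound n)) < 1.
Proof.
move=> hx0; elim/ltn_ind: T sigma => T IH sigma hT.
case: (leqP T (Nbound n)) => hTN.
  by exists sigma; apply: le_lt_trans (traj_ne2 HAne _ _ hTN) hT.
case: (pselect (exists t, (t < T)%N /\ seminormP (traj A sigma x0 t) < 1)) => [[t [tT ht]]|hall].
  exact: IH t tT sigma ht.
have hs1 t : (t < T)%N -> seminormP (traj A sigma x0 t) = 1.
  move=> tT; apply/eqP; rewrite eq_le (le_trans (traj_ne HAne _ _ _) hx0) /= leNgt.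
  by apply/negP => h; apply: hall; exists t.
set g := fun p : 'I_T * bool => rt (sg p.2 (traj A sigma x0 p.1)).
case: (pselect (injective g)) => [ginj|ginj].
  exfalso.
  have h1 : #|[set g p | p in [set: 'I_T * bool]]%SET| = #|[set: 'I_T * bool]%SET|.
    by apply: card_imset.
  have h2 : ([set g p | p in [set: 'I_T * bool]] \subset Qs n)%SET.
    apply/fintype.subsetP => f /imsetP [p _ ->]; apply: rt_inQ.
    by rewrite semi_sg; apply: hs1.
  have := subset_leq_card h2; rewrite h1 cardsT card_prod card_ord card_bool => h3.
  have h4 := cardQ n.
  move: hTN; rewrite /Nbound => hTN.
  have h5 : (2 ^ n.+1 <= 3 ^ n + 1)%N by lia.
  have h6 : ((3 ^ n + 1 - 2 ^ n.+1) %/ 2 * 2 + 1 >= 3 ^ n + 1 - 2 ^ n.+1)%N.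
    have := ltn_mod (3 ^ n + 1 - 2 ^ n.+1) 2; have := divn_eq (3 ^ n + 1 - 2 ^ n.+1) 2; lia.
  have h7 : (T * 2 + 2 ^ n.+1 <= 3 ^ n + 1)%N := leq_trans (leq_add h3 (leqnn _)) h4.
  move: h7 hTN h5 h6; generalize ((3 ^ n + 1 - 2 ^ n.+1) %/ 2)%N => q.
  generalize (3 ^ n)%N (2 ^ n.+1)%N => a b; lia.
move/existsNP: ginj => [[t1 b1] /existsNP [[t2 b2] /not_implyP [hg hne]]].
rewrite /g /= in hg.
have ht1 := hs1 _ (ltn_ord t1); have ht2 := hs1 _ (ltn_ord t2).
case: (ltngtP t1 t2) => h12.
- have [sigma' hs'] := shortcut h12 (ltnW (ltn_ord t2)) hT ht1 ht2 hg.
  apply: (IH _ _ sigma' hs'); have := ltn_ord t2; lia.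
- have [sigma' hs'] := shortcut h12 (ltnW (ltn_ord t1)) hT ht2 ht1 (esym hg).
  apply: (IH _ _ sigma' hs'); have := ltn_ord t1; lia.
- have e12 : t1 = t2 by apply: val_inj.
  subst t2; rewrite /sg in hg; case: b1 b2 hne hg => [] [] hne hg; try by case: hne.
  + by case: (rt_neqN n0 ht1 hg).
  + by case: (rt_neqN n0 ht1 (esym hg)).
Qed.

End Final.

Unset Implicit Arguments.

Theorem proposition1 (R : realType) (n m : nat) (A : 'I_m -> 'M[R]_n) :
  (2 <= n)%N ->
  (forall k, A k *m ones R n = ones R n) ->
  (forall k (x : 'cV[R]_n), seminormP (A k *m x) <= seminormP x) ->
  ((exists sigma : nat -> 'I_m, forall x0 : 'cV[R]_n,
      exists c : R, traj A sigma x0 @ \oo --> c *: ones R n)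
   <->
   (forall x0 : 'cV[R]_n, @polP R n x0 ->
      exists sigma : nat -> 'I_m,
        interior (@polP R n) (traj A sigma x0 (Nbound n)))).
Proof.
move=> n1 HA1 HAne.
have n0 : (0 < n)%N by exact: ltnW.
split.
- move=> [sigma Hs] x0 hx0.
  have [c hc] := Hs x0.
  have [T hT] := eventually_small n0 hc.
  have [sigma' h] := within_N n1 HAne hx0 hT.
  by exists sigma'; apply: semi_int.
- move=> H.
  have H' : forall x0 : 'cV[R]_n, seminormP x0 <= 1 ->
      exists sigma, seminormP (traj A sigma x0 (Nbound n)) < 1.
    move=> x0 hx0; have [sigma hs] := H x0 hx0; exists sigma; exact (int_semi n0 hs).
  have [s hs] := exists_good n0 HAne H'.
  case: s hs => [|a s0] hs.
    by have := good_nonnil n1 hs.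
  exists (psig a s0) => x0; exact (conv_main n1 HA1 HAne hs x0).
Qed.
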